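(* For every positive integer $N$ and every admissible index $\boldsymbol{k}=(k_1,\dots,k_r)$, \[ \zeta^\diamondsuit_N(\boldsymbol{k})=\sum_{\substack{0<n_{i,1}\le\cdots\le n_{i,k_i}<N\ (i\in[r])\\ n_{i,k_i}\le n_{i+1,1}\ (i\in[r]^1_{\boldsymbol{k}})\\ n_{i,k_i}<n_{i+1,1}\ (i\in[r-1]\setminus[r]^1_{\boldsymbol{k}})}}\ \prod_{i\in[r]}\frac1{(N-n_{i,1})\,n_{i,2}\cdots n_{i,k_i}}. \]
   Context: $[n]=\{1,\dots,n\}$. An admissible index is a nonempty tuple of positive integers with last entry $\ge2$. For admissible $\boldsymbol{k}=(k_1,\dots,k_r)$: $[r]^1_{\boldsymbol{k}}=\{i\in[r]:k_i=1\}$ (note $r\notin[r]^1_{\boldsymbol{k}}$), $S_{r,N}(A)=\{(n_1,\dots,n_r)\in[N-1]^r: n_i\le n_{i+1}\ (i\in A),\ n_i<n_{i+1}\ (i\in[r-1]\setminus A)\}$, and $\zeta^\diamondsuit_N(\boldsymbol{k})=\sum_{A\subset[r]^1_{\boldsymbol{k}}}\sum_{(n_1,\dots,n_r)\in S_{r,N}(A)}\prod_{i\in A}(N-n_i)^{-1}\prod_{i\in[r]\setminus A}n_i^{-k_i}$. Empty products equal $1$. *)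

(* Defs.v *)
(* values in rat. Indices are 0-based internally:
   paper's i in [r] is i : 'I_r (paper index i+1), paper's n_{i,j} (j in [k_i])
   is nget n i j with j < k_i (paper index j+1). *)
From HB Require Import structures.
From mathcomp Require Import all_boot all_order all_algebra.
Set Implicit Arguments. Unset Strict Implicit. Unset Printing Implicit Defensive.
Import Order.TTheory GRing.Theory Num.Theory.
Local Open Scope ring_scope.

Definition admissible (k : seq nat) : bool :=
  [&& k != [::], all (fun x => 0 < x)%N k & (2 <= last 0 k)%N].

Definition kk (k : seq nat) (i : nat) : nat := nth 0%N k i.

Definition ones (k : seq nat) : {set 'I_(size k)} :=
  [set i : 'I_(size k) | kk k i == 1%N].

Definition inS (k : seq nat) (N : nat) (A : {set 'I_(size k)})
    (n : {ffun 'I_(size k) -> 'I_N}) : bool :=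
  [forall i, (0 < n i)%N] &&
  [forall i : 'I_(size k), forall j : 'I_(size k),
     (val j == (val i).+1) ==>
       (if i \in A then (n i <= n j)%N else (n i < n j)%N)].

Definition zeta_diamond (k : seq nat) (N : nat) : rat :=
  \sum_(A : {set 'I_(size k)} | A \subset ones k)
    \sum_(n : {ffun 'I_(size k) -> 'I_N} | inS A n)
      ((\prod_(i in A) ((N - n i)%:R)^-1) *
       (\prod_(i in ~: A) (((n i)%:R) ^+ kk k i)^-1)).

Definition dind (k : seq nat) := {i : 'I_(size k) & 'I_(kk k i)}.

Definition dvars (k : seq nat) (N : nat) := {ffun dind k -> 'I_N}.

(* value n_{i,j} (0 if j is out of range, never used then) *)
Definition nget (k : seq nat) (N : nat) (n : dvars k N) (i : 'I_(size k))
    (j : nat) : nat :=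
  match (insub j : option 'I_(kk k i)) with
  | Some j' => val (n (@Tagged 'I_(size k) i (fun i0 : 'I_(size k) => 'I_(kk k i0)) j'))
  | None => 0%N
  end.

Definition rhs_range (k : seq nat) (N : nat) (n : dvars k N) : bool :=
  [forall i : 'I_(size k),
     (0 < nget n i 0)%N &&
     [forall j : 'I_(kk k i), ((val j).+1 < kk k i)%N ==>
        (nget n i j <= nget n i (val j).+1)%N]] &&
  [forall i : 'I_(size k), forall i' : 'I_(size k),
     (val i' == (val i).+1) ==>
       (if i \in ones k then (nget n i (kk k i).-1 <= nget n i' 0)%N
        else (nget n i (kk k i).-1 < nget n i' 0)%N)].

Definition rhs_sum (k : seq nat) (N : nat) : rat :=
  \sum_(n : dvars k N | rhs_range n)
    \prod_(i : 'I_(size k))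
      (((N - nget n i 0)%:R *
        \prod_(1 <= j < kk k i) (nget n i j)%:R)^-1).

(* Main.v *)
Require Import Defs.
From mathcomp Require Import all_boot all_order all_algebra.
From mathcomp Require Import ring.

Import GRing.Theory Num.Theory.
Local Open Scope ring_scope.

Section Kern.
Variable M : nat.
Definition cc (m n : nat) : rat := ('C(m, n))%:R / ('C(M, n))%:R.

Lemma binM_neq0 n : (n <= M)%N -> ('C(M, n))%:R != 0 :> rat.
Proof. by move=> h; rewrite pnatr_eq0 -lt0n bin_gt0. Qed.

Lemma cc_small m n : (m < n)%N -> cc m n = 0.
Proof. by move=> h; rewrite /cc bin_small // mul0r. Qed.

Lemma cc_rec m n : (n < M)%N -> cc m n.+1 * (M - n)%:R = cc m n * (m - n)%:R.
Proof.
move=> hn.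
have h1 := mul_bin_left m n. have h2 := mul_bin_left M n.
have e1 : (n.+1%:R * ('C(m, n.+1))%:R = (m - n)%:R * ('C(m, n))%:R :> rat).
  by rewrite -!natrM h1.
have e2 : (n.+1%:R * ('C(M, n.+1))%:R = (M - n)%:R * ('C(M, n))%:R :> rat).
  by rewrite -!natrM h2.
have nz1 := binM_neq0 _ hn. have nz0 := binM_neq0 _ (ltnW hn).
have nzn : (n.+1%:R : rat) != 0 by rewrite pnatr_eq0.
rewrite /cc.
have -> : ('C(m, n.+1))%:R = (m - n)%:R * ('C(m, n))%:R / n.+1%:R :> rat.
  by rewrite -e1 mulrAC divff // mul1r.
have -> : ('C(M, n.+1))%:R = (M - n)%:R * ('C(M, n))%:R / n.+1%:R :> rat.
  by rewrite -e2 mulrAC divff // mul1r.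
have nzMn : ((M - n)%:R : rat) != 0 by rewrite pnatr_eq0 subn_eq0 -ltnNge.
by field; rewrite ?nat1r ?nz0 ?nzMn ?nzn.
Qed.

Lemma W_lem m : (m < M)%N -> forall p,
  \sum_(p <= j < M) cc m j / (M - j)%:R = cc m p / (M - m)%:R.
Proof.
move=> hm p.
have [d] : exists d, d = (M - p)%N by exists (M - p)%N.
elim: d p => [|d IH] p hd.
  rewrite big_geq; last by rewrite -subn_eq0 -hd.
  rewrite cc_small ?mul0r //. apply: (leq_trans hm). by rewrite -subn_eq0 -hd.
have hp : (p < M)%N by rewrite -subn_gt0 -hd.
rewrite big_ltn // IH; last by rewrite subnS -hd.
have nzMp : ((M - p)%:R : rat) != 0 by rewrite pnatr_eq0 subn_eq0 -ltnNge.
have nzMm : ((M - m)%:R : rat) != 0 by rewrite pnatr_eq0 subn_eq0 -ltnNge.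
have e := @cc_rec m p hp.
have -> : cc m p.+1 = cc m p * (m - p)%:R / (M - p)%:R by rewrite -e; field.
case: (leqP p m) => hpm.
  have -> : ((M - p)%:R : rat) = (M - m)%:R + (m - p)%:R.
    by rewrite -natrD addnBA // subnK // ltnW.
  have nz2 : ((M - m)%:R + (m - p)%:R : rat) != 0.
    by rewrite -natrD addnBA // subnK ?pnatr_eq0 ?subn_eq0 -?ltnNge // ltnW.
  by field; rewrite ?nat1r ?nz2 ?nzMm ?nzMp.
by rewrite cc_small // !mul0r add0r.
Qed.

Lemma cc_diff m j : (j < M)%N ->
  (cc m.+1 j.+1 - cc m j.+1) / j.+1%:R = cc m j / (M - j)%:R.
Proof.
move=> hj.
have nz1 := binM_neq0 _ hj. have nz0 := binM_neq0 _ (ltnW hj).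
have nzMn : ((M - j)%:R : rat) != 0 by rewrite pnatr_eq0 subn_eq0 -ltnNge.
have nzj : (j.+1%:R : rat) != 0 by rewrite pnatr_eq0.
have e2 : (j.+1%:R * ('C(M, j.+1))%:R = (M - j)%:R * ('C(M, j))%:R :> rat).
  by rewrite -!natrM mul_bin_left.
rewrite /cc binS natrD.
have -> : ('C(M, j.+1))%:R = (M - j)%:R * ('C(M, j))%:R / j.+1%:R :> rat.
  by rewrite -e2 mulrAC divff // mul1r.
by field; rewrite ?nat1r ?nz0 ?nzMn ?nzj.
Qed.

Lemma Y_lem m p : (m <= M)%N ->
  \sum_(1 <= a < m.+1) cc a.-1 p / (M.+1 - a)%:R =
  \sum_(p.+1 <= n < M.+1) cc m n / n%:R.
Proof.
elim: m => [|m IH] hm.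
  rewrite big_geq // big_nat big1 // => n /andP[h _].
  by rewrite cc_small ?mul0r // (leq_trans _ h).
rewrite big_nat_recr //= IH ?(ltnW hm) // subSS.
have -> : \sum_(p.+1 <= n < M.+1) cc m.+1 n / n%:R =
   \sum_(p.+1 <= n < M.+1) cc m n / n%:R +
   \sum_(p.+1 <= n < M.+1) (cc m.+1 n - cc m n) / n%:R.
  by rewrite -big_split /=; apply: eq_bigr => n _; rewrite -mulrDl addrC subrK.
congr (_ + _).
rewrite big_add1 /= -W_lem //.
apply: eq_big_nat => j /andP[_ hj].
by rewrite cc_diff.
Qed.

Lemma X_lem m n : (0 < n)%N ->
  \sum_(1 <= b < m.+1) cc b n / b%:R = cc m n / n%:R.
Proof.
case: n => // j _.
elim: m => [|m IH].
  by rewrite big_geq // cc_small // mul0r.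
rewrite big_nat_recr //= IH.
have nzm : (m.+1%:R : rat) != 0 by rewrite pnatr_eq0.
have nzj : (j.+1%:R : rat) != 0 by rewrite pnatr_eq0.
have e : (m.+1%:R * ('C(m, j))%:R = j.+1%:R * ('C(m.+1, j.+1))%:R :> rat).
  by rewrite -!natrM (mul_bin_diag m.+1 j).
rewrite /cc.
have hA : ('C(m, j.+1))%:R = ('C(m.+1, j.+1))%:R - j.+1%:R * ('C(m.+1, j.+1))%:R / m.+1%:R :> rat.
  by rewrite -e mulrAC divff // mul1r binS natrD addrK.
rewrite hA.
case: (leqP j.+1 M) => hjM; last first.
  by rewrite (bin_small hjM) invr0 !mulr0 !mul0r addr0.
have nzD := binM_neq0 _ hjM.
by field; rewrite ?nat1r ?nzD ?nzm ?nzj.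
Qed.

Lemma F1_lem b j : cc b.+1 j.+1 - cc b j.+1 = j.+1%:R * cc b.+1 j.+1 / b.+1%:R.
Proof.
have nzb : (b.+1%:R : rat) != 0 by rewrite pnatr_eq0.
have nzj : (j.+1%:R : rat) != 0 by rewrite pnatr_eq0.
have e : (b.+1%:R * ('C(b, j))%:R = j.+1%:R * ('C(b.+1, j.+1))%:R :> rat).
  by rewrite -!natrM (mul_bin_diag b.+1 j).
have hA : ('C(b, j.+1))%:R = ('C(b.+1, j.+1))%:R - j.+1%:R * ('C(b.+1, j.+1))%:R / b.+1%:R :> rat.
  by rewrite -e mulrAC divff // mul1r binS natrD addrK.
rewrite /cc hA.
case: (leqP j.+1 M) => hjM; last first.
  by rewrite (bin_small hjM) invr0 !mulr0 ?subrr mul0r.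
have nzD := binM_neq0 _ hjM.
by field; rewrite ?nat1r ?nzD ?nzb ?nzj.
Qed.

Definition cp (s t : nat) : rat := if s is s'.+1 then cc s' t.-1 else 0.
Definition eps (s t : nat) : rat := cp s t - cp s.-1 t.

Lemma Zterm s j : (j < M)%N ->
  eps s.+1 j.+2 / j.+1%:R = cp s j.+1 / (M - j)%:R.
Proof.
move=> hj; rewrite /eps /=.
case: s => [|s] /=.
  by rewrite cc_small // subr0 !mul0r.
by rewrite cc_diff.
Qed.

Lemma Z_lem s t : (0 < s)%N -> (s <= M)%N -> (0 < t)%N ->
  cp s t / (M.+1 - s)%:R =
  \sum_(t <= n < M.+1) eps s n.+1 / n%:R +
  \sum_(t <= q < M.+1) eps s q / (M.+1 - q)%:R.
Proof.
case: s => // s _ hs; case: t => // p _.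
rewrite !big_add1 /= -big_split /= subSS /= -W_lem //.
apply: eq_big_nat => j /andP[_ hj].
rewrite Zterm // subSS /eps /=.
have nzMj : ((M - j)%:R : rat) != 0 by rewrite pnatr_eq0 subn_eq0 -ltnNge.
by field.
Qed.

Definition Yop (G : nat -> rat) (t : nat) : rat :=
  \sum_(a < M.+1 | (0 < a)%N && (t <= a)%N) G a / (M.+1 - a)%:R.
Definition Xop (G : nat -> rat) (t : nat) : rat :=
  \sum_(b < M.+1 | (0 < b)%N && (t <= b)%N) G b / b%:R.
Fixpoint xs (m : nat) (G : nat -> rat) : nat -> rat :=
  if m is m'.+1 then Xop (xs m' G) else G.
Definition Eop (R : nat -> rat) (t : nat) : rat :=
  \sum_(s < M.+2) eps s t * R s.
Definition Pop (n : nat) (H : nat -> rat) : rat :=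
  \sum_(b < M.+1 | (0 < b)%N) cc b n * H b / b%:R.

Lemma tel a t : \sum_(s < a.+1) eps s t = cp a t.
Proof.
elim: a => [|a IH]; first by rewrite big_ord1 /eps /= subrr.
by rewrite big_ord_recr /= IH /eps /= addrC subrK.
Qed.

Lemma cpE a t : (0 < a)%N -> cp a t = cc a.-1 t.-1.
Proof. by case: a. Qed.

Lemma EY G t : Eop (Yop G) t =
  \sum_(a < M.+1 | (0 < a)%N) cp a t * G a / (M.+1 - a)%:R.
Proof.
rewrite /Eop /Yop.
under eq_bigr do rewrite big_distrr.
rewrite (exchange_big_dep (fun a : 'I_M.+1 => (0 < a)%N)) /=; last by move=> s a _ /andP[].
apply: eq_bigr => a ha.
rewrite -big_distrl /= mulrA.
congr (_ * _ * _).
rewrite -(tel a t) (big_ord_widen M.+2 (fun s => eps s t)); last by rewrite ltnS ltnW.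
apply: eq_big => // s; by rewrite ha.
Qed.

Lemma Yord b t : (b < M.+1)%N -> (0 < t)%N ->
  \sum_(a < M.+1 | (0 < a)%N && (a <= b)%N) cp a t / (M.+1 - a)%:R =
  \sum_(n < M.+1 | (t <= n)%N) cc b n / n%:R.
Proof.
move=> hb ht.
have e := @Y_lem b t.-1 hb.
rewrite prednK // !big_geq_mkord in e.
rewrite (big_ord_widen_cond M.+1 _ (fun a => cc a.-1 t.-1 / (M.+1 - a)%:R) hb) in e.
transitivity (\sum_(i < M.+1 | (0 < i < b.+1)%N) cc i.-1 t.-1 / (M.+1 - i)%:R).
  by apply: eq_big => // a /andP[ha _]; rewrite cpE.
by rewrite e.
Qed.

Lemma EXY H t : (0 < t)%N ->
  \sum_(a < M.+1 | (0 < a)%N) cp a t * Xop H a / (M.+1 - a)%:R =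
  \sum_(n < M.+1 | (t <= n)%N) Pop n H / n%:R.
Proof.
move=> ht; rewrite /Xop.
under eq_bigr do rewrite mulrAC big_distrr.
rewrite (exchange_big_dep (fun b : 'I_M.+1 => (0 < b)%N)) /=; last by move=> a b _ /andP[].
under eq_bigr => b hb.
  rewrite -big_distrl /=.
  rewrite (eq_bigl (fun a : 'I_M.+1 => (0 < a)%N && (a <= b)%N)); last by move=> a; rewrite hb.
  rewrite Yord // big_distrl /=.
  over.
rewrite (exchange_big_dep (fun n : 'I_M.+1 => (t <= n)%N)) //=.
apply: eq_bigr => n hn; rewrite /Pop big_distrl /=.
apply: eq_big => // b; first by rewrite hn andbT.
move=> _; rewrite !mulrA. ring.
Qed.

Lemma PX n H : (0 < n)%N -> Pop n (Xop H) = Pop n H / n%:R.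
Proof.
move=> hn; rewrite /Pop /Xop.
under eq_bigr do rewrite mulrAC big_distrr.
rewrite (exchange_big_dep (fun b : 'I_M.+1 => (0 < b)%N)) /=; last by move=> a b _ /andP[].
rewrite big_distrl /=.
apply: eq_bigr => b hb.
rewrite -big_distrl /=.
have e := @X_lem b n hn.
rewrite big_geq_mkord (big_ord_widen_cond M.+1 _ (fun a => cc a n / a%:R) (ltn_ord b)) in e.
transitivity ((\sum_(i < M.+1 | (0 < i < b.+1)%N) cc i n / i%:R) * (H b / b%:R)).
  congr (_ * _); apply: eq_bigl => a /=; by rewrite hb ltnS.
rewrite e. ring.
Qed.

Lemma Pxs n m H : (0 < n)%N -> Pop n (xs m H) = Pop n H / (n%:R ^+ m).
Proof.
move=> hn; elim: m => [|m IH] /=; first by rewrite expr0 invr1 mulr1.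
by rewrite PX // IH exprS invfM mulrAC mulrA.
Qed.

Lemma PS j R : j.+1%:R * Pop j.+1 (fun v => R v.+1) = Eop R j.+2.
Proof.
rewrite /Eop big_ord_recl /eps /= subrr mul0r add0r.
rewrite /Pop big_distrr big_mkcond /=.
apply: eq_bigr => -[[|b] hb] _ /=; rewrite /bump /= ?add0n.
  by rewrite cc_small // subr0 mul0r.
rewrite F1_lem. ring.
Qed.

Lemma Ebase t : (0 < t)%N -> (t <= M.+1)%N -> Eop (fun _ => 1) t = 1.
Proof.
move=> h1 h2; rewrite /Eop.
under eq_bigr do rewrite mulr1.
rewrite tel /= /cc divff //.
by apply: binM_neq0; rewrite -ltnS prednK.
Qed.

Lemma E1 R : Eop R 1 = R 1%N.
Proof.
rewrite /Eop big_ord_recl big_ord_recl /eps /= subrr mul0r add0r.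
rewrite /cc !bin0 divff ?oner_eq0 // subr0 mul1r big1 ?addr0 //.
move=> i _; rewrite /bump /= !bin0 subrr mul0r //.
Qed.

Fixpoint Lsuf (k : seq nat) (t : nat) : rat :=
  if k is k0 :: k' then
    \sum_(n < M.+1 | (0 < n)%N && (t <= n)%N)
      ((n%:R ^+ k0)^-1 * Lsuf k' n.+1 +
       (if k0 == 1%N then ((M.+1 - n)%:R)^-1 * Lsuf k' n else 0))
  else 1.

Fixpoint Rsuf (k : seq nat) (t : nat) : rat :=
  if k is k0 :: k' then
    Yop (xs k0.-1 (fun v => Rsuf k' (if k0 == 1%N then v else v.+1))) t
  else 1.

Fixpoint good (k : seq nat) : bool :=
  if k is k0 :: k' then [&& (0 < k0)%N, good k' & (k0 != 1%N) || (k' != [::])]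
  else true.

Lemma Rsuf_top k : k != [::] -> Rsuf k M.+1 = 0.
Proof.
case: k => // k0 k' _ /=; rewrite /Yop big_pred0 // => a.
by rewrite [(M.+1 <= _)%N]leqNgt ltn_ord andbF.
Qed.

Lemma Inv k : good k -> forall t, (0 < t)%N -> (t <= M.+1)%N ->
  Lsuf k t = Eop (Rsuf k) t.
Proof.
elim: k => [|k0 k' IH] /=; first by move=> _ t h1 h2; rewrite Ebase.
case/and3P=> hk0 gk' hne t ht htM.
case: k0 hk0 hne => // -[|j] _ hne.
-
  have hk' : k' != [::] by [].
  rewrite /= EY.
  transitivity (\sum_(n < M.+1 | (0 < n)%N && (t <= n)%N)
     (n%:R^-1 * Eop (Rsuf k') n.+1 + ((M.+1 - n)%:R)^-1 * Eop (Rsuf k') n)).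
    apply: eq_bigr => n /andP[hn _]; rewrite expr1 !IH //.
    by apply: ltnW.
  rewrite /Eop.
  under eq_bigr do rewrite !big_distrr -big_split /=.
  rewrite exchange_big /= big_ord_recr /=.
  rewrite [X in _ + X]big1; last by move=> n _; rewrite Rsuf_top // !mulr0 addr0.
  rewrite addr0 [RHS]big_mkcond /=.
  apply: eq_bigr => -[[|s] hs] _ /=.
    by rewrite big1 // => n _; rewrite /eps /= !subrr !mul0r !mulr0 addr0.
  have hs' : (s.+1 <= M)%N by [].
  have e := @Z_lem s.+1 t isT hs' ht; rewrite /= in e.
  rewrite mulrAC e !big_geq_mkord.
  rewrite mulrDl !big_distrl /= -big_split /=.
  apply: eq_big => [n|n _]; first by apply/idP/idP => [/andP[]//|h]; rewrite h (leq_trans ht h).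
  ring.
-
  rewrite /= EY EXY //.
  apply: eq_big => [n|n hn]; first by apply/idP/idP => [/andP[]//|h]; rewrite h (leq_trans ht h).
  rewrite addr0 IH //.
  case: n hn => -[|i] hi //= _.
  rewrite Pxs // -PS.
  have nz : (i.+1%:R : rat) != 0 by rewrite pnatr_eq0.
  rewrite !exprS; field; rewrite ?nat1r ?nz //.
  by rewrite expf_neq0.
Qed.

Lemma main_rec k : good k -> Lsuf k 1 = Rsuf k 1.
Proof. by move=> g; rewrite Inv // E1. Qed.
End Kern.

Import GRing.Theory Num.Theory.
Set Implicit Arguments. Unset Strict Implicit. Unset Printing Implicit Defensive.
Local Open Scope ring_scope.

Section Gen.
Variable T : finType.

Definition fcons r (x : T) (h : {ffun 'I_r -> T}) : {ffun 'I_r.+1 -> T} :=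
  [ffun i => if unlift ord0 i is Some j then h j else x].

Lemma fcons0 r x (h : {ffun 'I_r -> T}) : fcons x h ord0 = x.
Proof. by rewrite ffunE unlift_none. Qed.

Lemma fconsS r x (h : {ffun 'I_r -> T}) j : fcons x h (lift ord0 j) = h j.
Proof. by rewrite ffunE liftK. Qed.

Lemma sum_fcons r (P : pred {ffun 'I_r.+1 -> T}) (F : {ffun 'I_r.+1 -> T} -> rat) :
  \sum_(g | P g) F g = \sum_(x : T) \sum_(h : {ffun 'I_r -> T} | P (fcons x h)) F (fcons x h).
Proof.
rewrite pair_big_dep /=.
rewrite (reindex (fun p : T * {ffun 'I_r -> T} => fcons p.1 p.2)) /=.
  by apply: eq_bigl => p.
exists (fun g : {ffun 'I_r.+1 -> T} => (g ord0, [ffun j => g (lift ord0 j)])).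
  move=> [x h] _ /=; rewrite fcons0; congr (_, _).
  by apply/ffunP => j; rewrite ffunE fconsS.
move=> g _; apply/ffunP => i; rewrite ffunE.
by case: (unliftP ord0 i) => [j ->|->]; rewrite ?liftK ?unlift_none // ffunE.
Qed.

Variables (A B D : finType) (phi : A + B -> D) (psi : D -> A + B).
Hypotheses (K1 : cancel phi psi) (K2 : cancel psi phi).

Definition glue (a : {ffun A -> T}) (b : {ffun B -> T}) : {ffun D -> T} :=
  [ffun d => match psi d with inl x => a x | inr y => b y end].

Lemma glueL a b x : glue a b (phi (inl x)) = a x.
Proof. by rewrite ffunE K1. Qed.
Lemma glueR a b y : glue a b (phi (inr y)) = b y.
Proof. by rewrite ffunE K1. Qed.

Lemma sum_glue (P : pred {ffun D -> T}) (F : {ffun D -> T} -> rat) :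
  \sum_(f | P f) F f =
  \sum_(a : {ffun A -> T}) \sum_(b : {ffun B -> T} | P (glue a b)) F (glue a b).
Proof.
rewrite pair_big_dep /=.
rewrite (reindex (fun p : {ffun A -> T} * {ffun B -> T} => glue p.1 p.2)) /=.
  by apply: eq_bigl => p.
exists (fun f : {ffun D -> T} => ([ffun x => f (phi (inl x))], [ffun y => f (phi (inr y))])).
  move=> [a b] _ /=; congr (_, _); apply/ffunP => x; by rewrite ffunE ?glueL ?glueR.
move=> f _; apply/ffunP => d; rewrite ffunE.
by case e: (psi d) => [x|y]; rewrite ffunE -e K2.
Qed.
End Gen.

Lemma forall_recl r (P : pred 'I_r.+1) :
  [forall i, P i] = P ord0 && [forall i : 'I_r, P (lift ord0 i)].
Proof.
apply/forallP/andP => [H|[H0 /forallP H] i]; first by split => //; apply/forallP.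
by case: (unliftP ord0 i) => [j ->|->].
Qed.

Set Implicit Arguments. Unset Strict Implicit. Unset Printing Implicit Defensive.
Import GRing.Theory Num.Theory.
Local Open Scope ring_scope.

Section LHS.
Variable M : nat.
Local Notation N := M.+1.

Definition vL (k : seq nat) (t : nat) (g : {ffun 'I_(size k) -> bool * 'I_N}) : bool :=
  [&& [forall i, (g i).1 ==> (kk k i == 1%N)],
      [forall i, (0 < (g i).2)%N],
      [forall i : 'I_(size k), forall j : 'I_(size k), (val j == (val i).+1) ==>
         (if (g i).1 then ((g i).2 <= (g j).2)%N else ((g i).2 < (g j).2)%N)] &
      [forall i : 'I_(size k), (val i == 0%N) ==> (t <= (g i).2)%N]].

Definition wL (k : seq nat) (g : {ffun 'I_(size k) -> bool * 'I_N}) : rat :=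
  \prod_(i : 'I_(size k))
    (if (g i).1 then ((N - (g i).2)%:R)^-1 else (((g i).2)%:R ^+ kk k i)^-1).

Arguments vL : clear implicits.
Arguments wL : clear implicits.

Lemma vL_cons k0 k' t x (h : {ffun 'I_(size k') -> bool * 'I_N}) :
  vL (k0 :: k') t (fcons x h) =
  [&& x.1 ==> (k0 == 1%N), (0 < x.2)%N, (t <= x.2)%N &
      vL k' (if x.1 then val x.2 else (val x.2).+1) h].
Proof.
rewrite /vL !forall_recl fcons0.
have E1 : [forall i, (fcons x h (lift ord0 i)).1 ==> (kk (k0 :: k') (lift ord0 i) == 1%N)]
   = [forall i, (h i).1 ==> (kk k' i == 1%N)] by apply: eq_forallb => i; rewrite fconsS.
have E2 : [forall i, (0 < (fcons x h (lift ord0 i)).2)%N] = [forall i, (0 < (h i).2)%N].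
  by apply: eq_forallb => i; rewrite fconsS.
have E3 : [forall i : 'I_(size k'), (\val (lift ord0 i) == (\val (@ord0 (size k'))).+1) ==>
         (if x.1 then (x.2 <= (fcons x h (lift ord0 i)).2)%N
          else (x.2 < (fcons x h (lift ord0 i)).2)%N)] =
   [forall i : 'I_(size k'), (\val i == 0%N) ==>
         ((if x.1 then \val x.2 else (\val x.2).+1) <= (h i).2)%N].
  by apply: eq_forallb => i; rewrite fconsS /=; case: (x.1).
have E4 : [forall i : 'I_(size k'), forall j : 'I_(size k').+1,
     (\val j == (\val (lift ord0 i)).+1) ==>
     (if (fcons x h (lift ord0 i)).1
      then ((fcons x h (lift ord0 i)).2 <= (fcons x h j).2)%N
      else ((fcons x h (lift ord0 i)).2 < (fcons x h j).2)%N)] =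
   [forall i : 'I_(size k'), forall j : 'I_(size k'), (\val j == (\val i).+1) ==>
         (if (h i).1 then ((h i).2 <= (h j).2)%N else ((h i).2 < (h j).2)%N)].
  apply: eq_forallb => i; rewrite forall_recl /=.
  by apply: eq_forallb => j; rewrite !fconsS /bump /=.
have E5 : [forall i : 'I_(size k'), (\val (lift ord0 i) == 0%N) ==> (t <= (fcons x h (lift ord0 i)).2)%N] = true.
  by apply/forallP => i.
rewrite E1 E2 E3 E4 E5 /= /kk /=.
set a := (x.1 ==> _); set b := [forall i, _]; set c := [forall i, _].
set d := [forall i, _]; set e := [forall i, _].
by case: a; case: b; case: c; case: d; case: e; case: (0 < x.2)%N; case: (t <= x.2)%N.
Qed.

Lemma wL_cons k0 k' x (h : {ffun 'I_(size k') -> bool * 'I_N}) :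
  wL (k0 :: k') (fcons x h) =
  (if x.1 then ((N - x.2)%:R)^-1 else ((x.2)%:R ^+ k0)^-1) * wL k' h.
Proof.
rewrite /wL big_ord_recl fcons0; congr (_ * _).
by apply: eq_bigr => i _; rewrite fconsS.
Qed.

Lemma LHS_rec k t : \sum_(g | vL k t g) wL k g = Lsuf M k t.
Proof.
elim: k t => [|k0 k' IH] t /=.
  rewrite (eq_bigr (fun _ => 1)); last by move=> g _; rewrite /wL big_ord0.
  rewrite (eq_bigl xpredT); last by move=> g; rewrite /vL /=; apply/and4P; split; apply/forallP => -[].
  by rewrite sumr_const card_ffun card_ord expn0.
rewrite sum_fcons.
pose w0 (x : bool * 'I_N) : rat := if x.1 then ((N - x.2)%:R)^-1 else ((x.2)%:R ^+ k0)^-1.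
pose th (x : bool * 'I_N) : nat := if x.1 then val x.2 else (val x.2).+1.
transitivity (\sum_(x : bool * 'I_N)
   (if [&& x.1 ==> (k0 == 1%N), (0 < x.2)%N & (t <= x.2)%N] then w0 x * Lsuf M k' (th x) else 0)).
  apply: eq_bigr => x _.
  case: ifP => hc.
    rewrite (eq_bigl (fun h => vL k' (th x) h)); last first.
      by move=> h; rewrite vL_cons; case/and3P: hc => -> -> ->.
    under eq_bigr => h _ do rewrite wL_cons.
    by rewrite -big_distrr /= IH.
  rewrite big_pred0 // => h; rewrite vL_cons; apply/negbTE; apply: contraFN hc.
  by case/and4P => -> -> -> _.
transitivity (\sum_(b : bool) \sum_(n : 'I_N)
   (if [&& b ==> (k0 == 1%N), (0 < n)%N & (t <= n)%N] then w0 (b, n) * Lsuf M k' (th (b, n)) else 0)).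
  by rewrite pair_big; apply: eq_bigr => -[b n].
rewrite big_bool /= big_split /= addrC.
congr (_ + _); rewrite [RHS]big_mkcond /=; apply: eq_bigr => n _.
  by case: (0 < n)%N; case: (t <= n)%N.
by case: (k0 == 1%N); case: (0 < n)%N; case: (t <= n)%N.
Qed.

Lemma zeta_g k : zeta_diamond k N = \sum_(g | vL k 1 g) wL k g.
Proof.
rewrite /zeta_diamond pair_big_dep /=.
rewrite (reindex (fun g : {ffun 'I_(size k) -> bool * 'I_N} =>
   ([set i | (g i).1], [ffun i => (g i).2]))) /=; last first.
  exists (fun p : {set 'I_(size k)} * {ffun 'I_(size k) -> 'I_N} => [ffun i => (i \in p.1, p.2 i)]).
    move=> g _; apply/ffunP => i; rewrite !ffunE inE; by case: (g i).
  move=> [A n] _ /=; congr (_, _); first by apply/setP => i; rewrite inE ffunE.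
  by apply/ffunP => i; rewrite !ffunE.
apply: eq_big => g.
  rewrite /inS /vL.
  have Ea : ([set i | (g i).1] \subset ones k) = [forall i, (g i).1 ==> (kk k i == 1%N)].
    apply/subsetP/forallP => H i.
      by apply/implyP => hi; have := H i; rewrite !inE; apply.
    by rewrite !inE => hi; have := H i; rewrite hi.
  have Eb : [forall i, (0 < [ffun i => (g i).2] i)%N] = [forall i, (0 < (g i).2)%N].
    by apply: eq_forallb => i; rewrite ffunE.
  have Ec : [forall i : 'I_(size k), forall j : 'I_(size k), (val j == (val i).+1) ==>
       (if i \in [set i0 | (g i0).1] then ([ffun i => (g i).2] i <= [ffun i => (g i).2] j)%N
        else ([ffun i => (g i).2] i < [ffun i => (g i).2] j)%N)] =
     [forall i : 'I_(size k), forall j : 'I_(size k), (val j == (val i).+1) ==>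
       (if (g i).1 then ((g i).2 <= (g j).2)%N else ((g i).2 < (g j).2)%N)].
    by apply: eq_forallb => i; apply: eq_forallb => j; rewrite !ffunE inE.
  rewrite Ea Eb Ec.
  case hb: [forall i, (0 < (g i).2)%N]; last by rewrite !andbF ?andFb.
  have -> : [forall i : 'I_(size k), (val i == 0%N) ==> (1 <= (g i).2)%N].
    by apply/forallP => i; apply/implyP => _; move/forallP: hb; apply.
  by rewrite andbT andbC.
move=> _; rewrite /wL [RHS](bigID (fun i => (g i).1)) /=.
congr (_ * _); apply: eq_big => i; rewrite ?inE ?ffunE //.
  by move=> ->.
by move/negbTE => ->.
Qed.
End LHS.
Set Implicit Arguments. Unset Strict Implicit. Unset Printing Implicit Defensive.
Import GRing.Theory Num.Theory.
Local Open Scope ring_scope.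

Section RHS.
Variable M : nat.
Local Notation N := M.+1.

Definition phiD k0 k' (x : 'I_k0 + dind k') : dind (k0 :: k') :=
  match x with
  | inl j => @Tagged 'I_(size (k0 :: k')) ord0 (fun i0 : 'I_(size (k0 :: k')) => 'I_(kk (k0 :: k') i0)) j
  | inr y => @Tagged 'I_(size (k0 :: k')) (lift ord0 (tag y))
                (fun i0 : 'I_(size (k0 :: k')) => 'I_(kk (k0 :: k') i0)) (tagged y)
  end.

Lemma phiD_inj k0 k' : injective (@phiD k0 k').
Proof.
move=> [j1|[i1 j1]] [j2|[i2 j2]] /= e.
- by rewrite (eq_from_Tagged e).
- by have := congr1 (fun d => val (tag d)) e.
- by have := congr1 (fun d => val (tag d)) e.
- have ei : i1 = i2.
    by apply: (@lift_inj _ ord0); have := congr1 tag e.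
  subst i2; by rewrite (eq_from_Tagged e).
Qed.

Lemma phiD_bij k0 k' : bijective (@phiD k0 k').
Proof.
apply: inj_card_bij; first exact: phiD_inj.
rewrite -(card_codom (@phiD_inj k0 k')).
apply: subset_leq_card; apply/subsetP => -[i j] _.
move: j; case: (unliftP ord0 i) => [i' ->|->] j.
  by apply/codomP; exists (inr (@Tagged _ i' (fun i0 => 'I_(kk k' i0)) j)).
by apply/codomP; exists (inl j).
Qed.

Definition bget m (b : {ffun 'I_m -> 'I_N}) (j : nat) : nat :=
  if (insub j : option 'I_m) is Some j' then val (b j') else 0%N.

Lemma bget_fcons0 m a (c : {ffun 'I_m -> 'I_N}) : bget (fcons a c) 0 = a.
Proof.
have e : insub 0%N = Some (@ord0 m) := valK (@ord0 m).
by rewrite /bget e fcons0.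
Qed.

Lemma bget_fconsS m a (c : {ffun 'I_m -> 'I_N}) j : bget (fcons a c) j.+1 = bget c j.
Proof.
rewrite /bget.
case: (ltnP j m) => hj.
  have e1 : insub j.+1 = Some (lift ord0 (Ordinal hj)) := valK (lift ord0 (Ordinal hj)).
  have e2 : insub j = Some (Ordinal hj) := valK (Ordinal hj).
  by rewrite e1 e2 fconsS.
rewrite !insubF //; by rewrite ?ltnS ltnNge hj.
Qed.

Definition chainb m (b : {ffun 'I_m -> 'I_N}) : bool :=
  [forall j : 'I_m, ((val j).+1 < m)%N ==> (bget b j <= bget b (val j).+1)%N].

Lemma chainb_fcons m a (c : {ffun 'I_m.+1 -> 'I_N}) :
  chainb (fcons a c) = (a <= bget c 0)%N && chainb c.
Proof.
rewrite /chainb forall_recl /= bget_fcons0 bget_fconsS; congr (_ && _).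
by apply: eq_forallb => j; rewrite /bump /= !bget_fconsS.
Qed.

Lemma BL m (w0 : nat -> rat) (Pf : pred nat) (G : nat -> rat) :
  (forall a, Pf a -> (0 < a)%N) ->
  \sum_(b : {ffun 'I_m.+1 -> 'I_N} | Pf (bget b 0) && chainb b)
     w0 (bget b 0) * (\prod_(1 <= j < m.+1) (bget b j)%:R)^-1 * G (bget b m) =
  \sum_(a < N | Pf a) w0 a * xs M m G a.
Proof.
elim: m w0 Pf G => [|m IH] w0 Pf G hP.
  rewrite sum_fcons [RHS]big_mkcond /=; apply: eq_bigr => x _.
  rewrite (eq_bigl (fun _ => Pf x)); last first.
    by move=> h; rewrite bget_fcons0 /chainb; apply/andb_idr => _; apply/forallP => -[[|j] hj].
  under eq_bigr do rewrite bget_fcons0 big_geq // invr1 mulr1.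
  case: (Pf x); last by rewrite big_pred0.
  rewrite (eq_bigl xpredT) //.
  rewrite sumr_const card_ffun; have -> : #|'I_0| = 0%N by rewrite card_ord.
  by rewrite expn0.
rewrite sum_fcons [RHS]big_mkcond /=; apply: eq_bigr => a _.
rewrite (eq_bigl (fun c => Pf a && ((a <= bget c 0)%N && chainb c))); last first.
  by move=> c; rewrite bget_fcons0 chainb_fcons.
under eq_bigr => c _.
  rewrite bget_fcons0 bget_fconsS big_add1 /=.
  under eq_bigr => j _ do rewrite bget_fconsS.
  rewrite big_ltn // invfM mulrA -(mulrA (w0 a)) -mulrA.
  over.
case ha: (Pf a); last by rewrite big_pred0.
rewrite -big_distrr /=.
have ha0 := hP _ ha.
rewrite (IH (fun v => (v%:R)^-1) (fun v => (a <= v)%N)); last by move=> v hv; apply: leq_trans hv.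
congr (_ * _); rewrite /Xop; apply: eq_big => v; first by case: (leqP a v) => h; rewrite ?andbT ?andbF ?(leq_trans ha0 h).
by move=> _; rewrite mulrC.
Qed.

Definition thrR k0 (b : {ffun 'I_k0 -> 'I_N}) : nat :=
  if k0 == 1%N then bget b k0.-1 else (bget b k0.-1).+1.
Definition vR k t (n : dvars k N) : bool :=
  rhs_range n && [forall i : 'I_(size k), (val i == 0%N) ==> (t <= nget n i 0)%N].
Definition wR k (n : dvars k N) : rat :=
  \prod_(i : 'I_(size k)) (((N - nget n i 0)%:R * \prod_(1 <= j < kk k i) (nget n i j)%:R)^-1).
Definition wblock k0 (b : {ffun 'I_k0 -> 'I_N}) : rat :=
  ((N - bget b 0)%:R * \prod_(1 <= j < k0) (bget b j)%:R)^-1.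
Arguments vR : clear implicits.
Arguments wR : clear implicits.

Definition rr k (f : 'I_(size k) -> nat -> nat) : bool :=
  [forall i, (0 < f i 0)%N &&
     [forall j : 'I_(kk k i), ((val j).+1 < kk k i)%N ==> (f i j <= f i (val j).+1)%N]] &&
  [forall i : 'I_(size k), forall i' : 'I_(size k), (val i' == (val i).+1) ==>
     ((if kk k i == 1%N then f i (kk k i).-1 else (f i (kk k i).-1).+1) <= f i' 0)%N].
Arguments rr : clear implicits.

Lemma rhs_range_rr k (n : dvars k N) : rhs_range n = rr k (nget n).
Proof.
rewrite /rhs_range /rr; congr (_ && _).
apply: eq_forallb => i; apply: eq_forallb => i'; rewrite inE.
by case: (kk k i == 1%N).
Qed.

Lemma rr_ext k f g : (forall i j, f i j = g i j) -> rr k f = rr k g.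
Proof.
move=> e; rewrite /rr; congr (_ && _).
  by apply: eq_forallb => i; rewrite !e; congr (_ && _); apply: eq_forallb => j; rewrite !e.
by apply: eq_forallb => i; apply: eq_forallb => i'; rewrite !e.
Qed.

Lemma rr_cons k0 k' (f : 'I_(size (k0 :: k')) -> nat -> nat) :
  rr (k0 :: k') f =
  [&& (0 < f ord0 0)%N,
      [forall j : 'I_k0, ((val j).+1 < k0)%N ==> (f ord0 j <= f ord0 (val j).+1)%N],
      rr k' (fun i => f (lift ord0 i)) &
      [forall i' : 'I_(size k'), (val i' == 0%N) ==>
         ((if k0 == 1%N then f ord0 k0.-1 else (f ord0 k0.-1).+1) <= f (lift ord0 i') 0)%N]].
Proof.
rewrite /rr !forall_recl -/(size k') /=.
under [X in _ && (_ && X)]eq_forallb => i do rewrite forall_recl /=.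
have taut : forall a b c d e : bool, [&& a && b && c, d & e] = [&& a, b, c && e & d].
  by do 5!case.
exact: taut.
Qed.

Section Glue.
Variables (k0 : nat) (k' : seq nat) (psi : dind (k0 :: k') -> 'I_k0 + dind k').
Hypotheses (K1 : cancel (@phiD k0 k') psi) (K2 : cancel psi (@phiD k0 k')).

Lemma nget_glue0 (b : {ffun 'I_k0 -> 'I_N}) (h : dvars k' N) j :
  nget (glue psi b h : dvars (k0 :: k') N) ord0 j = bget b j.
Proof.
rewrite /nget /bget.
case: (insub j) => [j'|] //.
have e := glueL K1 b h j'; rewrite /= in e.
by rewrite e.
Qed.

Lemma nget_glueS (b : {ffun 'I_k0 -> 'I_N}) (h : dvars k' N) i j :
  nget (glue psi b h : dvars (k0 :: k') N) (lift ord0 i) j = nget h i j.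
Proof.
rewrite /nget.
case: (insub j) => [j'|] //.
have e := glueR K1 b h (@Tagged _ i (fun i0 => 'I_(kk k' i0)) j'); rewrite /= in e.
by rewrite e.
Qed.


Lemma vR_glue t (b : {ffun 'I_k0 -> 'I_N}) (h : dvars k' N) :
  vR (k0 :: k') t (glue psi b h) =
  [&& (0 < bget b 0)%N, (t <= bget b 0)%N, chainb b & vR k' (thrR b) h].
Proof.
rewrite /vR !rhs_range_rr rr_cons forall_recl -/(size k') /=.
rewrite (@rr_ext k' _ (nget h)); last by move=> i j; rewrite nget_glueS.
rewrite !nget_glue0.
rewrite (@eq_forallb _ _ (fun j : 'I_k0 => ((val j).+1 < k0)%N ==> (bget b j <= bget b (val j).+1)%N));
  last by move=> j; rewrite !nget_glue0.
rewrite -/(chainb b).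
under eq_forallb => i do rewrite nget_glueS.
rewrite (_ : [forall i : 'I_(size k'), true] = true); last by apply/forallP.
rewrite /thrR.
have taut : forall a b c d e : bool, [&& [&& a, b, c & d], e & true] = [&& a, e, b, c & d].
  by do 5!case.
exact: taut.
Qed.

Lemma wR_glue (b : {ffun 'I_k0 -> 'I_N}) (h : dvars k' N) :
  wR (k0 :: k') (glue psi b h) = wblock b * wR k' h.
Proof.
rewrite /wR /wblock big_ord_recl nget_glue0 -/(size k') /=.
congr (_ * _).
  by congr ((_ * _)^-1); apply: eq_bigr => j _; rewrite nget_glue0.
apply: eq_bigr => i _; rewrite nget_glueS.
by congr ((_ * _)^-1); apply: eq_bigr => j _; rewrite nget_glueS.
Qed.
End Glue.

Lemma RHS_rec k t : all (fun x => 0 < x)%N k ->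
  \sum_(n | vR k t n) wR k n = Rsuf M k t.
Proof.
elim: k t => [|k0 k' IH] t /=.
  move=> _.
  rewrite (eq_bigr (fun _ => 1)); last by move=> n _; rewrite /wR big_ord0.
  rewrite (eq_bigl xpredT); last first.
    by move=> n; rewrite /vR /rhs_range; apply/andP; split; [apply/andP; split|]; apply/forallP => -[].
  rewrite sumr_const card_ffun.
  have -> : #|{: dind [::]}| = 0%N by apply: eq_card0 => -[[]].
  by rewrite expn0.
case/andP=> hk0 hk'.
have [psi K1 K2] := phiD_bij k0 k'.
rewrite (sum_glue K1 K2).
case: k0 hk0 psi K1 K2 => // m _ psi K1 K2.
transitivity (\sum_(a : {ffun 'I_m.+1 -> 'I_N} | ((0 < bget a 0) && (t <= bget a 0))%N && chainb a)
   ((N - bget a 0)%:R)^-1 * (\prod_(1 <= j < m.+1) (bget a j)%:R)^-1 *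
   Rsuf M k' (if m.+1 == 1%N then bget a m else (bget a m).+1)).
  rewrite [RHS]big_mkcond; apply: eq_bigr => a _.
  case: ifP => ha.
    rewrite (eq_bigl (fun h => vR k' (thrR a) h)); last first.
      by move=> h; rewrite (vR_glue K1) !andbA ha.
    under eq_bigr => h _ do rewrite (wR_glue K1).
    by rewrite -big_distrr /= IH // /wblock invfM /thrR.
  rewrite big_pred0 // => h; rewrite (vR_glue K1) !andbA ha //.
have e := @BL m (fun x => ((N - x)%:R)^-1) (fun x => (0 < x)%N && (t <= x)%N)
  (fun v => Rsuf M k' (if m.+1 == 1%N then v else v.+1)) (fun x hx => proj1 (andP hx)).
rewrite /= in e; rewrite e.
rewrite /Yop; apply: eq_bigr => a _; by rewrite mulrC.
Qed.
End RHS.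

Local Close Scope ring_scope.
Import GRing.Theory Num.Theory.

Lemma adm_good (k : seq nat) : all (fun x => 0 < x) k -> (k == [::]) || (1 < last 0 k) -> good k.
Proof.
elim: k => // k0 k' IH /= /andP[h0 hk'] hl.
rewrite h0 /=.
case: k' IH hk' hl => [|k1 k''] IH hk' hl.
  by rewrite /= orbF; move: hl => /= hl; rewrite neq_ltn hl orbT.
have -> : good (k1 :: k'') by apply: IH => //; apply/orP; right; exact: hl.
by rewrite /= orbT.
Qed.

Lemma rhs_g M k : rhs_sum k M.+1 = (\sum_(n | @vR M k 1 n) @wR M k n)%R.
Proof.
rewrite /rhs_sum; apply: eq_bigl => n; rewrite /vR.
case h: (rhs_range n) => //=; symmetry; apply/forallP => i; apply/implyP => _.
by case/andP: h => /forallP H _; case/andP: (H i).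
Qed.

Theorem mainTheorem13 (N : nat) (k : seq nat) :
  (0 < N)%N -> admissible k -> zeta_diamond k N = rhs_sum k N.
Proof.
case: N => // M _ /and3P[hne hpos hlast].
rewrite zeta_g LHS_rec main_rec ?rhs_g ?RHS_rec //.
by apply: adm_good => //; rewrite hlast orbT.
Qed.
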